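(* Let $(X,d)$ and $(Y,D)$ be metric spaces, $x\in X$, $y\in Y$. Suppose $\varepsilon\in(0,1]\mapsto\rho^x_\varepsilon$ is a zoom sequence at $x$ with values in $(Y,D)$ and base point $y$, with zoom modulus $F$, and suppose that for a given $\mu\in(0,1)$ this zoom sequence is scale stable at scale $\mu$, with limit relation $\bar\rho^x_\mu\subset\bar B(y,\mu)\times\bar B(y,1)$ and scale stability modulus $F_\mu$. Then for any $(u',u''),(v',v'')\in\bar\rho^x_\mu$ we have $$D(u'',v'')=\frac{1}{\mu}D(u',v').$$ In particular $\bar\rho^x_\mu$ is the graph of a function (its precision and resolution are equal to $0$).
   Context: For a relation $\rho\subset X\times Y$ between metric spaces $(X,d_X)$, $(Y,d_Y)$, its accuracy is $acc(\rho)=\sup\{|d_Y(y_1,y_2)-d_X(x_1,x_2)|:(x_1,y_1),(x_2,y_2)\in\rho\}$; $\mathrm{dom}\,\rho$ and $\mathrm{im}\,\rho$ denote the projections of $\rho$ to $X$ and $Y$. A zoom sequence at $x$ is a family $\varepsilon\in(0,1]\mapsto\rho^x_\varepsilon\subset\bar B(x,\varepsilon)\times Y$ with $\mathrm{dom}\,\rho^x_\varepsilon=\bar B(x,\varepsilon)$, $\mathrm{im}\,\rho^x_\varepsilon=Y$, $(x,y)\in\rho^x_\varepsilon$ for all $\varepsilon$, together with a zoom modulus $F:(0,1)\to[0,+\infty)$ with $\lim_{\varepsilon\to0}F(\varepsilon)=0$ such that $acc(\rho^x_\varepsilon)\le F(\varepsilon)$ for all $\varepsilon\in(0,1)$, where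 the accuracy is computed with the distance $\frac1\varepsilon d$ on $\bar B(x,\varepsilon)$ and $D$ on $Y$, i.e. $\sup\{|D(y_1,y_2)-\frac1\varepsilon d(x_1,x_2)|:(x_1,y_1),(x_2,y_2)\in\rho^x_\varepsilon\}\le F(\varepsilon)$. For $\mu\in(0,1)$ define $\rho^x_{\varepsilon,\mu}=\{(u',u'')\in\bar B(y,\mu)\times\bar B(y,1):\exists u\in\bar B(x,\varepsilon\mu),\ (u,u')\in\rho^x_\varepsilon,\ (u,u'')\in\rho^x_{\varepsilon\mu}\}$. The zoom sequence is scale stable at scale $\mu$ if there is a relation $\bar\rho^x_\mu\subset\bar B(y,\mu)\times\bar B(y,1)$ and a function $F_\mu$ with $F_\mu(\varepsilon)\to0$ as $\varepsilon\to0$ such that the Hausdorff distance between $\rho^x_{\varepsilon,\mu}$ and $\bar\rho^x_\mu$, in $\bar B(y,\mu)\times\bar B(y,1)$ with the distance $D_\mu((u',u''),(v',v''))=\frac1\mu D(u',v')+D(u'',v'')$, is at most $F_\mu(\varepsilon)$; $F_\mu$ is called a scale stability modulus. *)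

(* Defs.v *)
From Stdlib Require Import Reals Lra.
Open Scope R_scope.

Definition is_metric {T : Type} (d : T -> T -> R) : Prop :=
  (forall a b, 0 <= d a b) /\
  (forall a b, d a b = 0 <-> a = b) /\
  (forall a b, d a b = d b a) /\
  (forall a b c, d a c <= d a b + d b c).

Definition cball {T : Type} (dist : T -> T -> R) (c : T) (r : R) (z : T) : Prop :=
  dist c z <= r.

(* acc(rho) <= a, for rho computed with distances dX on X and dY on Y
   (literal unfolding of "sup {...} <= a"). *)
Definition acc_le {X Y : Type} (dX : X -> X -> R) (dY : Y -> Y -> R)
  (rho : X -> Y -> Prop) (a : R) : Prop :=
  forall x1 y1 x2 y2, rho x1 y1 -> rho x2 y2 -> Rabs (dY y1 y2 - dX x1 x2) <= a.

Definition lim0_at0 (F : R -> R) : Prop :=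
  forall eta, 0 < eta -> exists delta, 0 < delta /\
    forall e, 0 < e < 1 -> e < delta -> Rabs (F e) < eta.

Definition zoom_sequence {X Y : Type} (d : X -> X -> R) (D : Y -> Y -> R)
  (x : X) (y : Y) (rho : R -> X -> Y -> Prop) (F : R -> R) : Prop :=
  (forall e, 0 < e <= 1 ->
     (forall u v, rho e u v -> cball d x e u) /\
     (forall u, cball d x e u -> exists v, rho e u v) /\
     (forall v, exists u, rho e u v) /\
     rho e x y) /\
  (forall e, 0 < e < 1 -> 0 <= F e) /\
  lim0_at0 F /\
  (forall e, 0 < e < 1 ->
     acc_le (fun a b => d a b / e) D (rho e) (F e)).

Definition rho_eps_mu {X Y : Type} (d : X -> X -> R) (D : Y -> Y -> R)
  (x : X) (y : Y) (rho : R -> X -> Y -> Prop) (e mu : R) (p : Y * Y) : Prop :=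
  cball D y mu (fst p) /\ cball D y 1 (snd p) /\
  exists u, cball d x (e * mu) u /\ rho e u (fst p) /\ rho (e * mu) u (snd p).

Definition D_mu {Y : Type} (D : Y -> Y -> R) (mu : R) (p q : Y * Y) : R :=
  D (fst p) (fst q) / mu + D (snd p) (snd q).

(* Hausdorff distance between A and B (w.r.t. dist) is at most r:
   literal unfolding of  max(sup_{a in A} inf_{b in B} dist a b,
                             sup_{b in B} inf_{a in A} dist a b) <= r. *)
Definition hausdorff_le {T : Type} (dist : T -> T -> R)
  (A B : T -> Prop) (r : R) : Prop :=
  (forall a, A a -> forall eta, 0 < eta -> exists b, B b /\ dist a b < r + eta) /\
  (forall b, B b -> forall eta, 0 < eta -> exists a, A a /\ dist a b < r + eta).

Definition scale_stable {X Y : Type} (d : X -> X -> R) (D : Y -> Y -> R)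
  (x : X) (y : Y) (rho : R -> X -> Y -> Prop) (mu : R)
  (rhobar : Y * Y -> Prop) (Fmu : R -> R) : Prop :=
  (forall p, rhobar p -> cball D y mu (fst p) /\ cball D y 1 (snd p)) /\
  lim0_at0 Fmu /\
  (forall e, 0 < e <= 1 ->
     hausdorff_le (D_mu D mu) (rho_eps_mu d D x y rho e mu) rhobar (Fmu e)).

(* Main.v *)
Require Import Defs.
From Stdlib Require Import Reals Lra.
Open Scope R_scope.

Lemma small_zero (K a b : R) : 0 < a -> 0 < b ->
  (forall t eta, 0 < t -> 0 < eta -> K <= a * t + b * eta) -> K <= 0.
Proof.
  intros ha hb H.
  destruct (Rle_dec K 0) as [h|h]; [exact h|].
  exfalso. apply Rnot_le_lt in h.
  assert (H1 := H (K / (4*a)) (K/(4*b)) ltac:(apply Rdiv_lt_0_compat; lra)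
     ltac:(apply Rdiv_lt_0_compat; lra)).
  replace (a * (K / (4*a)) + b * (K/(4*b))) with (K/2) in H1 by (field; lra).
  lra.
Qed.

Theorem proposition4p3 (X Y : Type) (d : X -> X -> R) (D : Y -> Y -> R)
  (x : X) (y : Y) (rho : R -> X -> Y -> Prop) (F : R -> R)
  (mu : R) (rhobar : Y * Y -> Prop) (Fmu : R -> R) :
  is_metric d -> is_metric D ->
  zoom_sequence d D x y rho F ->
  0 < mu < 1 ->
  scale_stable d D x y rho mu rhobar Fmu ->
  (forall u' u'' v' v'', rhobar (u', u'') -> rhobar (v', v'') ->
     D u'' v'' = D u' v' / mu) /\
  (forall u' u'' v'', rhobar (u', u'') -> rhobar (u', v'') -> u'' = v'').
Proof.
  intros _ [Dpos [Dsep [Dsym Dtri]]] [_ [Fpos [Flim Facc]]] Hmu [_ [Fmulim Haus]].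
  assert (Main : forall u' u'' v' v'', rhobar (u', u'') -> rhobar (v', v'') ->
     mu * D u'' v'' = D u' v').
  { intros u' u'' v' v'' Hu Hv.
    set (K := Rabs (mu * D u'' v'' - D u' v')).
    assert (Step : forall e eta, 0 < e < 1 -> 0 < eta ->
       K <= 4 * mu * (Fmu e + eta) + mu * F (e * mu) + F e).
    { intros e eta He Heta.
      destruct (Haus e ltac:(lra)) as [_ H2].
      destruct (H2 _ Hu eta Heta) as [[a1 a2] [[_ [_ [u [_ [Ru1 Ru2]]]]] Ha]].
      destruct (H2 _ Hv eta Heta) as [[b1 b2] [[_ [_ [w [_ [Rw1 Rw2]]]]] Hb]].
      unfold D_mu in Ha, Hb; simpl in Ha, Hb, Ru1, Ru2, Rw1, Rw2.
      assert (A1 := Facc e He _ _ _ _ Ru1 Rw1).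
      assert (emu : 0 < e * mu < 1).
      { split; [nra|]. nra. }
      assert (A2 := Facc (e*mu) emu _ _ _ _ Ru2 Rw2). cbv beta in A1, A2.
      set (s := d u w / e) in *.
      replace (d u w / (e * mu)) with (s / mu) in A2 by (unfold s; field; lra).
      assert (P1 := Dpos a1 u'). assert (P2 := Dpos a2 u'').
      assert (P3 := Dpos b1 v'). assert (P4 := Dpos b2 v'').
      assert (Q1 : D a1 u' < mu * (Fmu e + eta)).
      { assert (D a1 u' / mu < Fmu e + eta) by lra.
        apply (Rmult_lt_compat_l mu) in H; [|lra].
        replace (mu * (D a1 u' / mu)) with (D a1 u') in H by (field; lra). exact H. }
      assert (Q2 : D b1 v' < mu * (Fmu e + eta)).
      { assert (D b1 v' / mu < Fmu e + eta).
        { assert (0 <= D b1 v' / mu) by (unfold Rdiv; apply Rmult_le_pos; [lra|left; apply Rinv_0_lt_compat; lra]). lra. }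
        apply (Rmult_lt_compat_l mu) in H; [|lra].
        replace (mu * (D b1 v' / mu)) with (D b1 v') in H by (field; lra). exact H. }
      assert (Q3 : D a2 u'' < Fmu e + eta).
      { assert (0 <= D a1 u' / mu) by (unfold Rdiv; apply Rmult_le_pos; [lra|left; apply Rinv_0_lt_compat; lra]). lra. }
      assert (Q4 : D b2 v'' < Fmu e + eta).
      { assert (0 <= D b1 v' / mu) by (unfold Rdiv; apply Rmult_le_pos; [lra|left; apply Rinv_0_lt_compat; lra]). lra. }
      assert (A2' : Rabs (mu * D a2 b2 - s) <= mu * F (e*mu)).
      { replace (mu * D a2 b2 - s) with (mu * (D a2 b2 - s/mu)) by (field; lra).
        rewrite Rabs_mult, (Rabs_right mu) by lra.
        apply Rmult_le_compat_l; [lra|]. exact A2. }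
      assert (T1 := Dtri u' a1 v'). assert (T2 := Dtri a1 b1 v').
      assert (T3 := Dtri a1 u' b1). assert (T4 := Dtri u' v' b1).
      assert (T5 := Dtri u'' a2 v''). assert (T6 := Dtri a2 b2 v'').
      assert (T7 := Dtri a2 u'' b2). assert (T8 := Dtri u'' v'' b2).
      rewrite (Dsym u' a1) in T1. rewrite (Dsym v' b1) in T4.
      rewrite (Dsym u'' a2) in T5. rewrite (Dsym v'' b2) in T8.
      assert (mu * D u'' v'' <= mu * (D a2 u'' + D a2 v'')) by (apply Rmult_le_compat_l; lra).
      assert (mu * D a2 v'' <= mu * (D a2 b2 + D b2 v'')) by (apply Rmult_le_compat_l; lra).
      assert (mu * D a2 b2 <= mu * (D a2 u'' + D u'' b2)) by (apply Rmult_le_compat_l; lra).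
      assert (mu * D u'' b2 <= mu * (D u'' v'' + D b2 v'')) by (apply Rmult_le_compat_l; lra).
      assert (mu * D a2 u'' <= mu * (Fmu e + eta)) by (apply Rmult_le_compat_l; lra).
      assert (mu * D b2 v'' <= mu * (Fmu e + eta)) by (apply Rmult_le_compat_l; lra).
      unfold K. revert A1 A2'. unfold Rabs. repeat destruct Rcase_abs; intros; nra. }
    assert (K <= 0).
    { apply (small_zero K (4*mu + mu + 1) (4*mu)); try lra.
      intros t eta Ht Heta.
      destruct (Fmulim t Ht) as [d1 [Hd1 P1]].
      destruct (Flim t Ht) as [d2 [Hd2 P2]].
      set (e := Rmin (Rmin d1 d2) (1/2)).
      assert (He1 : e <= d1 /\ e <= d2 /\ e <= 1/2).
      { unfold e. repeat split;
        [eapply Rle_trans; [apply Rmin_l|apply Rmin_l]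
        |eapply Rle_trans; [apply Rmin_l|apply Rmin_r]|apply Rmin_r]. }
      assert (He2 : 0 < e).
      { unfold e. apply Rmin_pos; [apply Rmin_pos|]; lra. }
      assert (X1 := P1 (e/2) ltac:(lra) ltac:(lra)).
      assert (X2 := P2 (e/2) ltac:(lra) ltac:(lra)).
      assert (X3 := P2 (e/2*mu) ltac:(split; nra) ltac:(nra)).
      assert (S := Step (e/2) eta ltac:(lra) Heta).
      revert X1 X2 X3. unfold Rabs. repeat destruct Rcase_abs; intros; nra. }
    assert (0 <= K) by apply Rabs_pos.
    assert (K = 0) by lra. unfold K in H1.
    revert H1. unfold Rabs. destruct Rcase_abs; intros; lra. }
  split.
  - intros u1 u2 v1 v2 H H0. assert (E := Main _ _ _ _ H H0). rewrite <- E. field. lra.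
  - intros u' u'' v'' H1 H2. apply (Main _ _ _ _ H1) in H2.
    rewrite (proj2 (Dsep u' u') eq_refl) in H2.
    apply Dsep. nra.
Qed.
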